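(* Let $t>0$ and $k\ge 1$ be constants, and let $p_0,p_1,p_2,p_3$ be real numbers with $0<p_i<1$ and $\sum_{i=0}^{3}p_i=1$. Define $T(n,r)$ for real $n\ge 0$ and integers $r\ge 0$ by $$T(n,r)=\begin{cases}1 & \text{if } n\le t k^r,\\ 1+\sum_{i=0}^{3} T\big(p_i(n-tk^r),\,r+1\big) & \text{if } n> t k^r.\end{cases}$$ Then, as $N\to\infty$, $T(N,0)\in\Theta(N^s)$ for some real number $s$ with $0<s\le 1$.
   Context: $T(N,0)$ is the asymptotic space (number of counters) used by a DN-tree with parameters $k$ and $t$ after recording $N$ extent accesses: a tree vertex at level $r$ saturates at threshold $tk^r$, after which further accesses are distributed among its four children with probabilities $p_0,\dots,p_3$. The parameters $t,k,p_i$ are fixed as $N\to\infty$. *)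

(* Defs.v *)
From Stdlib Require Import Reals Lra ZArith.
Open Scope R_scope.

Fixpoint T_fuel (t k p0 p1 p2 p3 : R) (f : nat) (n : R) (r : nat) : R :=
  match f with
  | O => 1
  | S f' =>
      if Rle_dec n (t * k ^ r) then 1
      else 1 + (T_fuel t k p0 p1 p2 p3 f' (p0 * (n - t * k ^ r)) (S r)
              + T_fuel t k p0 p1 p2 p3 f' (p1 * (n - t * k ^ r)) (S r)
              + T_fuel t k p0 p1 p2 p3 f' (p2 * (n - t * k ^ r)) (S r)
              + T_fuel t k p0 p1 p2 p3 f' (p3 * (n - t * k ^ r)) (S r))
  end.

(* Enough fuel: every recursive call decreases n by at least t (as p_i <= 1
   and k >= 1), so floor-ish(n/t)+1 steps always reach the base case
   when t > 0, n >= 0; the value then equals the true T(n,r). *)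
Definition T (t k p0 p1 p2 p3 : R) (n : R) (r : nat) : R :=
  T_fuel t k p0 p1 p2 p3 (Z.to_nat (up (n / t)) + 1) n r.

(* Main.v *)
Require Import Defs.
From Stdlib Require Import Reals Lra Lia ZArith.
Open Scope R_scope.

Lemma Rpow_pos x y : 0 < Rpower x y.
Proof. unfold Rpower; apply exp_pos. Qed.

Lemma T_base t k p0 p1 p2 p3 f n r :
  n <= t * k ^ r -> T_fuel t k p0 p1 p2 p3 f n r = 1.
Proof.
  intros H; destruct f; cbn [T_fuel]; auto.
  destruct (Rle_dec n (t * k ^ r)); [reflexivity|contradiction].
Qed.

Lemma norm_child t k q n r : 1 <= k ->
  q * (n - t * k ^ r) / k ^ S r = q / k * (n / k ^ r - t).
Proof.
  intros hk. assert (0 < k ^ r) by (apply pow_lt; lra).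
  simpl. field. split; lra.
Qed.

Lemma upper_child t k p0 p1 p2 p3 s A q f n r :
  0 < t -> 1 <= k -> 0 < q < 1 -> 0 <= s ->
  4/3 <= A * Rpower (t * (q / k)) s ->
  (forall n r, t * k ^ r < n ->
     T_fuel t k p0 p1 p2 p3 f n r <= A * Rpower (n / k ^ r) s - 1/3) ->
  t * k ^ r < n ->
  T_fuel t k p0 p1 p2 p3 f (q * (n - t * k ^ r)) (S r)
    <= Rpower (q / k) s * (A * Rpower (n / k ^ r) s) - 1/3.
Proof.
  intros ht hk hq hs hA IH hn.
  assert (hkr : 0 < k ^ r) by (apply pow_lt; lra).
  assert (hm : t < n / k ^ r) by (apply Rmult_lt_reg_r with (k^r); auto;
    unfold Rdiv; rewrite Rmult_assoc, Rinv_l, Rmult_1_r; lra).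
  assert (hqk : 0 < q / k) by (apply Rdiv_lt_0_compat; lra).
  assert (hRm : Rpower (q/k) s * Rpower (n / k ^ r) s = Rpower (q/k * (n/k^r)) s)
    by (apply Rpower_mult_distr; lra).
  assert (hApos : 0 < A).
  { pose proof (Rpow_pos (t * (q / k)) s).
    destruct (Rle_lt_dec A 0); [|lra]. nra. }
  destruct (Rle_dec (q * (n - t * k ^ r)) (t * k ^ S r)) as [Hs|Hb].
  - rewrite T_base by exact Hs.
    assert (Rpower (t * (q / k)) s <= Rpower (q/k * (n/k^r)) s).
    { apply Rle_Rpower_l; auto. split. apply Rmult_lt_0_compat; lra. nra. }
    rewrite <- hRm in H. nra.
  - apply Rnot_le_lt in Hb.
    eapply Rle_trans. apply IH. exact Hb.
    rewrite norm_child by lra.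
    assert (Rpower (q / k * (n / k ^ r - t)) s <= Rpower (q/k * (n/k^r)) s).
    { apply Rle_Rpower_l; auto. split. apply Rmult_lt_0_compat; lra. nra. }
    rewrite <- hRm in H. nra.
Qed.

Lemma upper t k p0 p1 p2 p3 s A :
  0 < t -> 1 <= k -> 0 < p0 < 1 -> 0 < p1 < 1 -> 0 < p2 < 1 -> 0 < p3 < 1 ->
  0 <= s ->
  Rpower (p0/k) s + Rpower (p1/k) s + Rpower (p2/k) s + Rpower (p3/k) s = 1 ->
  4/3 <= A * Rpower (t * (p0 / k)) s ->
  4/3 <= A * Rpower (t * (p1 / k)) s ->
  4/3 <= A * Rpower (t * (p2 / k)) s ->
  4/3 <= A * Rpower (t * (p3 / k)) s ->
  forall f n r, t * k ^ r < n ->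
    T_fuel t k p0 p1 p2 p3 f n r <= A * Rpower (n / k ^ r) s - 1/3.
Proof.
  intros ht hk h0 h1 h2 h3 hs hsum hA0 hA1 hA2 hA3.
  induction f as [|f IH]; intros n r hn.
  - simpl.
    assert (hkr : 0 < k ^ r) by (apply pow_lt; lra).
    assert (hm : t < n / k ^ r) by (apply Rmult_lt_reg_r with (k^r); auto;
      unfold Rdiv; rewrite Rmult_assoc, Rinv_l, Rmult_1_r; lra).
    assert (hApos : 0 < A).
    { pose proof (Rpow_pos (t * (p0 / k)) s).
      destruct (Rle_lt_dec A 0); [|lra]. nra. }
    assert (Rpower (t * (p0 / k)) s <= Rpower (n/k^r) s).
    { apply Rle_Rpower_l; auto. assert (0 < p0/k) by (apply Rdiv_lt_0_compat; lra).
      assert (p0 / k <= 1). { apply Rmult_le_reg_r with k; [lra|].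
        unfold Rdiv; rewrite Rmult_assoc, Rinv_l; lra. }
      split; nra. }
    nra.
  - cbn [T_fuel]. destruct (Rle_dec n (t * k ^ r)) as [Hc|Hc].
    + exfalso. lra.
    + pose proof (upper_child t k p0 p1 p2 p3 s A p0 f n r ht hk h0 hs hA0 IH hn) as c0.
      pose proof (upper_child t k p0 p1 p2 p3 s A p1 f n r ht hk h1 hs hA1 IH hn) as c1.
      pose proof (upper_child t k p0 p1 p2 p3 s A p2 f n r ht hk h2 hs hA2 IH hn) as c2.
      pose proof (upper_child t k p0 p1 p2 p3 s A p3 f n r ht hk h3 hs hA3 IH hn) as c3.
      set (Y := A * Rpower (n / k ^ r) s) in *.
      replace Y with ((Rpower (p0/k) s + Rpower (p1/k) s + Rpower (p2/k) s
                       + Rpower (p3/k) s) * Y) by (rewrite hsum; ring).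
      lra.
Qed.

Lemma lower_child t k p0 p1 p2 p3 s a c q f n r :
  0 < t -> 1 <= k -> 0 < q < 1 -> 0 <= s -> 0 <= a -> 0 < c ->
  t <= c * (1 - q) ->
  (forall n r, 0 <= n -> n < t * INR f ->
     a * Rpower (n / k ^ r + c) s - 1/3 <= T_fuel t k p0 p1 p2 p3 f n r) ->
  t * k ^ r < n -> n < t * INR (S f) ->
  Rpower (q / k) s * (a * Rpower (n / k ^ r + c) s) - 1/3
    <= T_fuel t k p0 p1 p2 p3 f (q * (n - t * k ^ r)) (S r).
Proof.
  intros ht hk hq hs ha hc hcq IH hn hf.
  assert (hkr : 1 <= k ^ r) by (apply pow_R1_Rle; lra).
  assert (hm : t < n / k ^ r) by (apply Rmult_lt_reg_r with (k^r); [lra|];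
    unfold Rdiv; rewrite Rmult_assoc, Rinv_l, Rmult_1_r; lra).
  assert (hqk : 0 < q / k) by (apply Rdiv_lt_0_compat; lra).
  assert (hqk1 : q / k <= q). { apply Rmult_le_reg_r with k; [lra|].
        unfold Rdiv; rewrite Rmult_assoc, Rinv_l; nra. }
  assert (hRm : Rpower (q/k) s * Rpower (n / k ^ r + c) s
                = Rpower (q/k * (n/k^r + c)) s)
    by (apply Rpower_mult_distr; lra).
  rewrite S_INR in hf.
  eapply Rle_trans; [|apply IH].
  2: { apply Rmult_le_pos; nra. }
  2: { nra. }
  rewrite norm_child by lra.
  rewrite Rmult_comm, Rmult_assoc, (Rmult_comm _ (Rpower (q/k) s)), hRm.
  assert (Rpower (q / k * (n / k ^ r + c)) s <= Rpower (q / k * (n / k ^ r - t) + c) s).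
  { apply Rle_Rpower_l; auto. split. apply Rmult_lt_0_compat; lra. nra. }
  nra.
Qed.

Lemma lower t k p0 p1 p2 p3 s a c :
  0 < t -> 1 <= k -> 0 < p0 < 1 -> 0 < p1 < 1 -> 0 < p2 < 1 -> 0 < p3 < 1 ->
  0 <= s -> 0 <= a -> 0 < c ->
  Rpower (p0/k) s + Rpower (p1/k) s + Rpower (p2/k) s + Rpower (p3/k) s = 1 ->
  a * Rpower (t + c) s <= 4/3 ->
  t <= c * (1 - p0) -> t <= c * (1 - p1) -> t <= c * (1 - p2) -> t <= c * (1 - p3) ->
  forall f n r, 0 <= n -> n < t * INR f ->
    a * Rpower (n / k ^ r + c) s - 1/3 <= T_fuel t k p0 p1 p2 p3 f n r.
Proof.
  intros ht hk h0 h1 h2 h3 hs ha hc hsum hac hc0 hc1 hc2 hc3.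
  induction f as [|f IH]; intros n r hn hf.
  - simpl in hf. lra.
  - assert (hkr : 1 <= k ^ r) by (apply pow_R1_Rle; lra).
    destruct (Rle_dec n (t * k ^ r)) as [Hc|Hc].
    + rewrite T_base by exact Hc.
      assert (n / k ^ r <= t).
      { apply Rmult_le_reg_r with (k^r); [lra|].
        unfold Rdiv; rewrite Rmult_assoc, Rinv_l, Rmult_1_r; lra. }
      assert (0 <= n / k ^ r) by (unfold Rdiv; apply Rmult_le_pos; [lra|left; apply Rinv_0_lt_compat; lra]).
      assert (Rpower (n / k ^ r + c) s <= Rpower (t + c) s)
        by (apply Rle_Rpower_l; auto; lra).
      nra.
    + apply Rnot_le_lt in Hc.
      cbn [T_fuel]. destruct (Rle_dec n (t * k ^ r)) as [Hd|Hd].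
      { exfalso. lra. }
      pose proof (lower_child t k p0 p1 p2 p3 s a c p0 f n r ht hk h0 hs ha hc hc0 IH Hc hf) as c0.
      pose proof (lower_child t k p0 p1 p2 p3 s a c p1 f n r ht hk h1 hs ha hc hc1 IH Hc hf) as c1.
      pose proof (lower_child t k p0 p1 p2 p3 s a c p2 f n r ht hk h2 hs ha hc hc2 IH Hc hf) as c2.
      pose proof (lower_child t k p0 p1 p2 p3 s a c p3 f n r ht hk h3 hs ha hc hc3 IH Hc hf) as c3.
      simpl in c0, c1, c2, c3.
      set (Y := a * Rpower (n / k ^ r + c) s) in *.
      replace Y with ((Rpower (p0/k) s + Rpower (p1/k) s + Rpower (p2/k) s
                       + Rpower (p3/k) s) * Y) by (rewrite hsum; ring).
      lra.
Qed.

Lemma auxc t S x q : 0 < t -> q < 1 -> x <= S -> x * (1 - q) = 1 -> t <= t * S * (1 - q).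
Proof.
  intros. assert (x * (1-q) <= S * (1-q)) by (apply Rmult_le_compat_r; lra).
  rewrite Rmult_assoc. nra.
Qed.

Lemma IZR_le_INR z : IZR z <= INR (Z.to_nat z).
Proof.
  destruct (Z_lt_le_dec z 0).
  - pose proof (pos_INR (Z.to_nat z)). apply IZR_lt in l. lra.
  - rewrite INR_IZR_INZ, Z2Nat.id by exact l. lra.
Qed.

Theorem corollary1 (t k p0 p1 p2 p3 : R)
  (ht : 0 < t) (hk : 1 <= k)
  (hp0 : 0 < p0 < 1) (hp1 : 0 < p1 < 1) (hp2 : 0 < p2 < 1) (hp3 : 0 < p3 < 1)
  (hsum : p0 + p1 + p2 + p3 = 1) :
  exists s : R, 0 < s <= 1 /\
    exists c1 c2 N0 : R, 0 < c1 /\ 0 < c2 /\ 0 < N0 /\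
      forall N : R, N0 <= N ->
        c1 * Rpower N s <= T t k p0 p1 p2 p3 N 0 <= c2 * Rpower N s.
Proof.
  assert (hw : forall q, 0 < q < 1 -> 0 < q / k /\ q / k <= q).
  { intros q hq. split. apply Rdiv_lt_0_compat; lra.
    apply Rmult_le_reg_r with k; [lra|].
    unfold Rdiv; rewrite Rmult_assoc, Rinv_l; nra. }
  pose proof (hw p0 hp0) as w0. pose proof (hw p1 hp1) as w1.
  pose proof (hw p2 hp2) as w2. pose proof (hw p3 hp3) as w3.
  set (g := fun s => 1 - (exp (s * ln (p0/k)) + exp (s * ln (p1/k))
                         + exp (s * ln (p2/k)) + exp (s * ln (p3/k)))).
  assert (gc : continuity g) by (unfold g; reg).
  assert (g0 : g 0 = -3) by (unfold g; rewrite !Rmult_0_l, exp_0; ring).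
  assert (g1 : g 1 = 1 - 1 / k).
  { unfold g. rewrite !Rmult_1_l, !exp_ln by lra.
    replace (p0 / k + p1 / k + p2 / k + p3 / k) with ((p0+p1+p2+p3)/k) by (field; lra).
    rewrite hsum. reflexivity. }
  destruct (IVT_cor g 0 1 gc ltac:(lra)) as [s [hs gs]].
  { rewrite g0, g1. assert (1/k <= 1). { apply Rmult_le_reg_r with k; [lra|].
      unfold Rdiv; rewrite Rmult_1_l, Rinv_l; lra. } nra. }
  assert (spos : 0 < s). { destruct (Req_dec s 0); [subst; lra|lra]. }
  assert (hS : Rpower (p0/k) s + Rpower (p1/k) s + Rpower (p2/k) s + Rpower (p3/k) s = 1)
    by (unfold Rpower, g in *; lra).
  set (A := 4/3 * (/ Rpower (t * (p0/k)) s + / Rpower (t * (p1/k)) s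
                 + / Rpower (t * (p2/k)) s + / Rpower (t * (p3/k)) s)).
  assert (hAq : forall q, q = p0 \/ q = p1 \/ q = p2 \/ q = p3 ->
            4/3 <= A * Rpower (t * (q / k)) s).
  { intros q Hq. unfold A.
    pose proof (Rpow_pos (t * (p0/k)) s). pose proof (Rpow_pos (t * (p1/k)) s).
    pose proof (Rpow_pos (t * (p2/k)) s). pose proof (Rpow_pos (t * (p3/k)) s).
    pose proof (Rinv_0_lt_compat _ H). pose proof (Rinv_0_lt_compat _ H0).
    pose proof (Rinv_0_lt_compat _ H1). pose proof (Rinv_0_lt_compat _ H2).
    destruct Hq as [ -> | [ -> | [ -> | -> ] ] ].
    - assert (/ Rpower (t * (p0 / k)) s * Rpower (t * (p0 / k)) s = 1) by (field; lra). nra.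
    - assert (/ Rpower (t * (p1 / k)) s * Rpower (t * (p1 / k)) s = 1) by (field; lra). nra.
    - assert (/ Rpower (t * (p2 / k)) s * Rpower (t * (p2 / k)) s = 1) by (field; lra). nra.
    - assert (/ Rpower (t * (p3 / k)) s * Rpower (t * (p3 / k)) s = 1) by (field; lra). nra. }
  assert (Apos : 0 < A).
  { pose proof (hAq p0 ltac:(auto)). pose proof (Rpow_pos (t * (p0 / k)) s).
    destruct (Rle_lt_dec A 0); [|lra]. nra. }
  set (c := t * (/ (1 - p0) + / (1 - p1) + / (1 - p2) + / (1 - p3))).
  assert (hcq : forall q, q = p0 \/ q = p1 \/ q = p2 \/ q = p3 -> t <= c * (1 - q)).
  { intros q Hq. unfold c.
    assert (0 < / (1 - p0)) by (apply Rinv_0_lt_compat; lra).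
    assert (0 < / (1 - p1)) by (apply Rinv_0_lt_compat; lra).
    assert (0 < / (1 - p2)) by (apply Rinv_0_lt_compat; lra).
    assert (0 < / (1 - p3)) by (apply Rinv_0_lt_compat; lra).
    destruct Hq as [ -> | [ -> | [ -> | -> ] ] ].
    - apply auxc with (/ (1 - p0)); [lra|lra|lra|field; lra].
    - apply auxc with (/ (1 - p1)); [lra|lra|lra|field; lra].
    - apply auxc with (/ (1 - p2)); [lra|lra|lra|field; lra].
    - apply auxc with (/ (1 - p3)); [lra|lra|lra|field; lra]. }
  assert (cpos : 0 < c).
  { pose proof (hcq p0 ltac:(auto)). destruct (Rle_lt_dec c 0); [|lra]. nra. }
  set (a := 4/3 / Rpower (t + c) s).
  assert (apos : 0 < a) by (apply Rdiv_lt_0_compat; [lra|apply Rpow_pos]).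
  assert (hac : a * Rpower (t + c) s <= 4/3).
  { unfold a. right. field. pose proof (Rpow_pos (t+c) s). lra. }
  exists s. split; [lra|].
  set (B := Rpower (2 / (3 * a)) (1 / s)).
  assert (Bpos : 0 < B) by apply Rpow_pos.
  exists (a / 2), A, (t + 1 + B).
  split; [lra|]. split; [lra|]. split; [lra|].
  intros N HN.
  assert (HT : T t k p0 p1 p2 p3 N 0 =
    T_fuel t k p0 p1 p2 p3 (Z.to_nat (up (N / t)) + 1) N 0) by reflexivity.
  rewrite HT.
  assert (HN1 : N / k ^ 0 = N) by (simpl; field).
  split.
  - pose proof (lower t k p0 p1 p2 p3 s a c ht hk hp0 hp1 hp2 hp3 ltac:(lra)
      ltac:(lra) cpos hS hac (hcq p0 ltac:(auto)) (hcq p1 ltac:(auto))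
      (hcq p2 ltac:(auto)) (hcq p3 ltac:(auto)) (Z.to_nat (up (N / t)) + 1) N 0
      ltac:(lra)) as HL.
    rewrite HN1 in HL.
    assert (Hf : N < t * INR (Z.to_nat (up (N / t)) + 1)).
    { rewrite plus_INR, INR_1. pose proof (IZR_le_INR (up (N/t))).
      destruct (archimed (N / t)) as [Ha _].
      assert (t * (N / t) = N) by (field; lra). nra. }
    specialize (HL Hf).
    assert (Rpower N s <= Rpower (N + c) s) by (apply Rle_Rpower_l; lra).
    assert (Rpower B s <= Rpower N s) by (apply Rle_Rpower_l; lra).
    assert (HBs : Rpower B s = 2 / (3 * a)).
    { unfold B. rewrite Rpower_mult. replace (1 / s * s) with 1 by (field; lra).
      apply Rpower_1. apply Rdiv_lt_0_compat; lra. }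
    assert (a * (2 / (3 * a)) = 2/3) by (field; lra).
    nra.
  - pose proof (upper t k p0 p1 p2 p3 s A ht hk hp0 hp1 hp2 hp3 ltac:(lra) hS
      (hAq p0 ltac:(auto)) (hAq p1 ltac:(auto)) (hAq p2 ltac:(auto))
      (hAq p3 ltac:(auto)) (Z.to_nat (up (N / t)) + 1) N 0 ltac:(simpl; lra)) as HU.
    rewrite HN1 in HU. lra.
Qed.
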